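(* If for some $t'>0$ the set $I(t')$ is a single point, i.e. $l(t')=r(t')$, then for all $t>t'$ the set $I(t)$ has empty interior, i.e. $l(t)=r(t)$ whenever $I(t)\ne\emptyset$.
   Context: Standing assumptions: $u_0,u_b:[0,\infty)\to\mathbb{R}$ bounded measurable with $u_b>0$; $\rho_0,\rho_b:[0,\infty)\to(0,\infty)$ positive locally bounded measurable. For $x,t,y,\tau\ge0$: $F(y,x,t)=\int_0^y[tu_0(\eta)+\eta-x]\rho_0(\eta)\,d\eta$, $G(\tau,x,t)=\int_0^\tau[x-u_b(\eta)(t-\eta)]\rho_b(\eta)u_b(\eta)\,d\eta$, $F(x,t)=\min_{y\ge0}F(y,x,t)$, $G(x,t)=\min_{\tau\ge0}G(\tau,x,t)$. For fixed $t$, $F(\cdot,t)$ is decreasing and $G(\cdot,t)$ increasing in $x$, so $I(t)=\{x\ge0:F(x,t)=G(x,t)\}$ is a closed (possibly empty) interval, written $[l(t),r(t)]$ when nonempty. *)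

(* Defs.v *)
From HB Require Import structures.
From mathcomp Require Import all_boot all_order all_algebra.
From mathcomp Require Import all_classical all_reals all_analysis.
Set Implicit Arguments. Unset Strict Implicit. Unset Printing Implicit Defensive.
Import Order.TTheory GRing.Theory Num.Theory.
Local Open Scope classical_set_scope.
Local Open Scope ring_scope.

Section Defs.
Variable R : realType.

Definition Fyxt (u0 rho0 : R -> R) (y x t : R) : R :=
  Rintegral lebesgue_measure `[0, y]
    (fun eta => (t * u0 eta + eta - x) * rho0 eta).

Definition Gtauxt (ub rhob : R -> R) (tau x t : R) : R :=
  Rintegral lebesgue_measure `[0, tau]
    (fun eta => (x - ub eta * (t - eta)) * rhob eta * ub eta).

(* F(x,t) = min_{y >= 0} F(y,x,t), taken as the infimum (it is attained) *)
Definition Fmin (u0 rho0 : R -> R) (x t : R) : R :=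
  inf [set Fyxt u0 rho0 y x t | y in `[0, +oo[%classic].

Definition Gmin (ub rhob : R -> R) (x t : R) : R :=
  inf [set Gtauxt ub rhob tau x t | tau in `[0, +oo[%classic].

Definition Iset (u0 rho0 ub rhob : R -> R) (t : R) : set R :=
  [set x | 0 <= x /\ Fmin u0 rho0 x t = Gmin ub rhob x t].

Definition bounded_on_halfline (f : R -> R) : Prop :=
  exists M : R, forall x, 0 <= x -> `|f x| <= M.

Definition locally_bounded_on_halfline (f : R -> R) : Prop :=
  forall a : R, exists M : R, forall x, 0 <= x <= a -> `|f x| <= M.

Definition positive_on_halfline (f : R -> R) : Prop :=
  forall x, 0 <= x -> 0 < f x.

End Defs.

(* Main.v *)
Require Import Defs.
From HB Require Import structures.
From mathcomp Require Import all_boot all_order all_algebra.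
From mathcomp Require Import all_classical all_reals all_analysis.
From mathcomp Require Import ring lra.
Import Order.TTheory GRing.Theory Num.Theory.
Local Open Scope classical_set_scope.
Local Open Scope ring_scope.

Section Aux.
Context {R : realType}.
Local Notation mu := (@lebesgue_measure R).

Definition LB (f : R -> R) := measurable_fun (`[0, +oo[%classic : set R) f /\
  locally_bounded_on_halfline f.

Lemma bnd_of (f : R -> R) (A : set R) (M : R) :
  (forall x, A x -> `|f x| <= M) -> [bounded f x | x in A].
Proof.
move=> H; exists M; split; first exact: num_real.
move=> M' hM x Ax /=; exact: (le_trans (H x Ax) (ltW hM)).
Qed.

Lemma sub0y (y : R) : (`[0, y]%classic : set R) `<=` `[0, +oo[%classic.
Proof. by move=> x /=; rewrite !in_itv /= andbT => /andP[]. Qed.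

Lemma LB_int f y : LB f -> mu.-integrable `[0, y] (EFin \o f).
Proof.
move=> [mf lf]; apply: measurable_bounded_integrable.
- exact: measurable_itv.
- have := lebesgue_measure_itv `[0, y]; rewrite /= => ->; case: ifP => _; last by rewrite ltry.
  by rewrite -EFinD ltry.
- by apply: (measurable_funS _ (@sub0y y) mf); exact: measurable_itv.
- have [M HM] := lf y; exists M; split; first exact: num_real.
  move=> M' hM x; rewrite /= in_itv /= => /andP[h1 h2].
  apply: le_trans (ltW hM); apply: HM; rewrite h1 h2 //.
Qed.

Lemma LB_cst c : LB (fun _ => c).
Proof. split; first exact: measurable_cst. by move=> a; exists `|c|. Qed.

Lemma LB_id : LB (fun x => x).
Proof.
split; first exact: measurable_id.
move=> a; exists `|a| => x /andP[h1 h2]; rewrite ger0_norm //.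
by apply: le_trans h2 (ler_norm _).
Qed.

Lemma LB_add f g : LB f -> LB g -> LB (fun x => f x + g x).
Proof.
move=> [mf lf] [mg lg]; split; first exact: measurable_realfun.measurable_funD.
move=> a; have [M1 H1] := lf a; have [M2 H2] := lg a.
exists (M1 + M2) => x hx; apply: le_trans (ler_normD _ _) _.
exact: lerD (H1 x hx) (H2 x hx).
Qed.

Lemma LB_opp f : LB f -> LB (fun x => - f x).
Proof.
move=> [mf lf]; split; first exact: measurable_realfun.measurable_funN.
move=> a; have [M1 H1] := lf a; exists M1 => x hx; rewrite normrN; exact: H1.
Qed.

Lemma LB_mul f g : LB f -> LB g -> LB (fun x => f x * g x).
Proof.
move=> [mf lf] [mg lg]; split; first exact: measurable_realfun.measurable_funM.
move=> a; have [M1 H1] := lf a; have [M2 H2] := lg a.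
exists (M1 * M2) => x hx; rewrite normrM.
exact: ler_pM (normr_ge0 _) (normr_ge0 _) (H1 x hx) (H2 x hx).
Qed.

End Aux.
Arguments LB_add {R f g}.
Arguments LB_mul {R f g}.
Arguments LB_opp {R f}.
Arguments LB_int {R f}.

Section Aux2.
Variable R : realType.
Local Notation mu := (@lebesgue_measure R).

Lemma LB_ind (a : R) : LB (fun x => @indic R R `[0, a]%classic x).
Proof.
split; first by apply: measurable_realfun.measurable_indic; exact: measurable_itv.
move=> b; exists 1 => x _; rewrite indicE; case: (_ \in _) => /=; rewrite ?normr1 ?normr0 //.
Qed.

Lemma lowbnd (f : R -> R) y a A : LB f -> 0 <= a -> 0 <= A ->
 (forall x, 0 <= x <= y -> x <= a -> - A <= f x) ->
 (forall x, 0 <= x <= y -> a < x -> 0 <= f x) ->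
 - (A * a) <= Rintegral mu `[0, y] f.
Proof.
move=> lf a0 A0 H1 H2.
have mD : measurable (`[0, y]%classic : set R) by exact: measurable_itv.
have lg := LB_mul (LB_cst (- A)) (LB_ind a).
have key : Rintegral mu `[0, y] (fun x => - A * @indic R R `[0, a]%classic x)
    <= Rintegral mu `[0, y] f.
  apply: le_Rintegral => //; [exact: (LB_int y lg) | exact: (LB_int y lf) |].
  move=> x; rewrite /= in_itv /= => hx; rewrite indicE.
  have [hxa|hxa] := lerP x a.
    rewrite mem_set ?mulr1; first exact: H1.
    by rewrite /= in_itv /= hxa; case/andP: hx => -> _.
  rewrite memNset ?mulr0; first exact: H2.
  by rewrite /= in_itv /= (leNgt x a) hxa andbF.
apply: le_trans key.
rewrite RintegralZl //; last exact: (LB_int y (LB_ind a)).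
have hle : Rintegral mu `[0, y] (fun x => @indic R R `[0, a]%classic x) <= a.
  rewrite /Rintegral (@integral_indic _ _ _ mu _ (measurable_itv `[0, y]) _ (measurable_itv `[0, a])).
  pose Sa : set R := `[0, a]%classic. pose Sy : set R := `[0, y]%classic.
  have h1 : (mu (Sa `&` Sy) <= mu Sa)%E by apply: measureIl; exact: measurable_itv.
  have h2 : (mu (Sa `&` Sy) <= a%:E)%E.
    apply: (le_trans h1); rewrite /Sa.
    have := lebesgue_measure_itv `[0, a]; rewrite /= => ->.
    by case: ifP => _; rewrite ?lee_fin // oppr0 addr0.
  have hf : mu (Sa `&` Sy) \is a fin_num.
    by rewrite ge0_fin_numE ?measure_ge0 // (le_lt_trans h2) ?ltry.
  by rewrite -lee_fin fineK.
rewrite mulNr lerN2; apply: ler_wpM2l => //.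
Qed.

End Aux2.

Ltac lbt := repeat (first [assumption | apply: LB_add | apply: LB_opp | apply: LB_mul | apply: LB_cst | apply: LB_id]).

Section Aux3.
Context {R : realType}.
Local Notation mu := (@lebesgue_measure R).

Lemma F_lin (u0 rho0 : R -> R) y x t : LB u0 -> LB rho0 ->
  Fyxt u0 rho0 y x t = t * Rintegral mu `[0, y] (fun e => u0 e * rho0 e)
    + Rintegral mu `[0, y] (fun e => e * rho0 e) - x * Rintegral mu `[0, y] rho0.
Proof.
move=> l1 l2; rewrite /Fyxt.
have mD : measurable (`[0, y]%classic : set R) by exact: measurable_itv.
have -> : Rintegral mu `[0, y] (fun e => (t * u0 e + e - x) * rho0 e) = Rintegral mu `[0, y] (fun e => (t * (u0 e * rho0 e) + e * rho0 e) - x * rho0 e).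
  by apply: eq_Rintegral => e _; ring.
rewrite RintegralB //; try (apply: LB_int; lbt).
rewrite RintegralD //; try (apply: LB_int; lbt).
rewrite RintegralZl //; try (apply: LB_int; lbt).
rewrite RintegralZl //; try (apply: LB_int; lbt).
Qed.

Lemma G_lin (ub rhob : R -> R) y x t : LB ub -> LB rhob ->
  Gtauxt ub rhob y x t = x * Rintegral mu `[0, y] (fun e => rhob e * ub e)
    - t * Rintegral mu `[0, y] (fun e => ub e * ub e * rhob e)
    + Rintegral mu `[0, y] (fun e => e * (ub e * ub e * rhob e)).
Proof.
move=> l1 l2; rewrite /Gtauxt.
have mD : measurable (`[0, y]%classic : set R) by exact: measurable_itv.
have -> : Rintegral mu `[0, y] (fun e => (x - ub e * (t - e)) * rhob e * ub e) = Rintegral mu `[0, y] (fun e => (x * (rhob e * ub e) - t * (ub e * ub e * rhob e)) + e * (ub e * ub e * rhob e)).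
  by apply: eq_Rintegral => e _; ring.
rewrite RintegralD //; try (apply: LB_int; lbt).
  rewrite RintegralB //; try (apply: LB_int; lbt).
  rewrite RintegralZl //; try (apply: LB_int; lbt).
  rewrite RintegralZl //; try (apply: LB_int; lbt).
Qed.

End Aux3.

Section Aux4.
Context {R : realType}.
Local Notation mu := (@lebesgue_measure R).

Lemma F_at0 (u0 rho0 : R -> R) x t : Fyxt u0 rho0 0 x t = 0.
Proof. by rewrite /Fyxt set_itv1 Rintegral_set1. Qed.

Lemma G_at0 (ub rhob : R -> R) x t : Gtauxt ub rhob 0 x t = 0.
Proof. by rewrite /Gtauxt set_itv1 Rintegral_set1. Qed.

Lemma F_bnd (u0 rho0 : R -> R) M0 x t : LB u0 -> LB rho0 ->
  (forall e, 0 <= e -> `|u0 e| <= M0) -> positive_on_halfline rho0 ->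
  0 <= x -> 0 <= t ->
  has_lbound [set Fyxt u0 rho0 y x t | y in `[0, +oo[%classic].
Proof.
move=> l1 l2 hM hp x0 t0.
have M00 : 0 <= M0 by apply: le_trans (hM 0 (lexx 0)); exact: normr_ge0.
pose a := x + t * M0.
have a0 : 0 <= a by rewrite /a; apply: addr_ge0 => //; exact: mulr_ge0.
have [Mr HMr] := l2.2 a.
have Mr0 : 0 <= Mr by apply: le_trans (HMr 0 _); [exact: normr_ge0| rewrite lexx a0].
exists (- ((a * Mr) * a)) => z [y _ <-].
apply: lowbnd => //; first (apply: LB_mul; lbt); first exact: mulr_ge0.
- move=> e /andP[e0 ey] ea.
  have hu := hM e e0; rewrite ler_norml in hu; case/andP: hu => hu1 hu2.
  have hr : `|rho0 e| <= Mr by apply: HMr; rewrite e0 ea.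
  have hr0 := hp e e0.
  rewrite gtr0_norm // in hr.
  have w0 : 0 <= t * u0 e + e - x + a.
    rewrite /a; have : - M0 * t <= u0 e * t by apply: ler_wpM2r.
    lra.
  have p1 := mulr_ge0 w0 (ltW hr0).
  have p2 : 0 <= a * (Mr - rho0 e) by apply: mulr_ge0 => //; lra.
  nra.
- move=> e /andP[e0 ey] ea.
  have hu := hM e e0; rewrite ler_norml in hu; case/andP: hu => hu1 hu2.
  have hr0 := hp e e0.
  apply: mulr_ge0; last exact: ltW.
  have : - M0 * t <= u0 e * t by apply: ler_wpM2r.
  rewrite /a in ea; lra.
Qed.

Lemma G_bnd (ub rhob : R -> R) Mu x t : LB ub -> LB rhob ->
  (forall e, 0 <= e -> `|ub e| <= Mu) -> positive_on_halfline ub ->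
  positive_on_halfline rhob ->
  0 <= x -> 0 <= t ->
  has_lbound [set Gtauxt ub rhob y x t | y in `[0, +oo[%classic].
Proof.
move=> l1 l2 hM hpu hp x0 t0.
have Mu0 : 0 <= Mu by apply: le_trans (hM 0 (lexx 0)); exact: normr_ge0.
have [Mr HMr] := l2.2 t.
have Mr0 : 0 <= Mr by apply: le_trans (HMr 0 _); [exact: normr_ge0| rewrite lexx t0].
exists (- ((Mu * Mu * Mr * t) * t)) => z [y _ <-].
apply: lowbnd => //; first by lbt. by rewrite !mulr_ge0.
- move=> e /andP[e0 ey] ea.
  have hu := hM e e0; have hu0 := hpu e e0; rewrite gtr0_norm // in hu.
  have hr : `|rhob e| <= Mr by apply: HMr; rewrite e0 ea.
  have hr0 := hp e e0.
  rewrite gtr0_norm // in hr.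
  have q1 : ub e * ub e * rhob e <= Mu * Mu * Mr.
    apply: ler_pM; [|exact: ltW| |exact: hr].
    - by apply: mulr_ge0; exact: ltW.
    - by apply: ler_pM => //; exact: ltW.
  have q0 : 0 <= ub e * ub e * rhob e by apply: mulr_ge0; [apply: mulr_ge0|]; exact: ltW.
  have q2 : (ub e * ub e * rhob e) * (t - e) <= (Mu * Mu * Mr) * t.
    apply: ler_pM => //; lra.
  have q3 : 0 <= x * (rhob e * ub e) by apply: mulr_ge0 => //; apply: mulr_ge0; exact: ltW.
  have -> : (x - ub e * (t - e)) * rhob e * ub e = x * (rhob e * ub e) - (ub e * ub e * rhob e) * (t - e) by ring.
  lra.
- move=> e /andP[e0 ey] ea.
  have hu0 := hpu e e0; have hr0 := hp e e0.
  apply: mulr_ge0; last exact: ltW.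
  apply: mulr_ge0; last exact: ltW.
  have : ub e * (t - e) <= 0 by apply: mulr_ge0_le0; [exact: ltW| lra].
  lra.
Qed.

End Aux4.

Theorem corollary2p8 (R : realType) (u0 ub rho0 rhob : R -> R)
  (mu0 : measurable_fun (`[0, +oo[%classic : set R) u0)
  (mub : measurable_fun (`[0, +oo[%classic : set R) ub)
  (mrho0 : measurable_fun (`[0, +oo[%classic : set R) rho0)
  (mrhob : measurable_fun (`[0, +oo[%classic : set R) rhob)
  (bu0 : bounded_on_halfline u0) (bub : bounded_on_halfline ub)
  (pub : positive_on_halfline ub)
  (prho0 : positive_on_halfline rho0) (prhob : positive_on_halfline rhob)
  (lrho0 : locally_bounded_on_halfline rho0)
  (lrhob : locally_bounded_on_halfline rhob)
  (t' : R) (ht' : 0 < t')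
  (hsingle : exists p : R, Iset u0 rho0 ub rhob t' = [set p]) :
  forall t : R, t' < t ->
    Iset u0 rho0 ub rhob t = set0 \/
    exists p : R, Iset u0 rho0 ub rhob t = [set p].
Proof.
move=> t htt.
have [M0 hM0] := bu0; have [Mu hMu] := bub.
have M00 : 0 <= M0 by apply: le_trans (hM0 0 (lexx 0)); exact: normr_ge0.
have lu0 : LB u0.
  by split => // a; exists M0 => x /andP[x0 _]; exact: hM0.
have lub : LB ub.
  by split => // a; exists Mu => x /andP[x0 _]; exact: hMu.
have lr0 : LB rho0 by [].
have lrb : LB rhob by [].
have t0 : 0 <= t by apply: ltW; apply: lt_trans htt.
have tpos : 0 < t by apply: lt_trans htt.
pose mu := (@lebesgue_measure R).
pose P y := Rintegral mu `[0, y] rho0.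
pose U y := Rintegral mu `[0, y] (fun e => u0 e * rho0 e).
pose Mm y := Rintegral mu `[0, y] (fun e => e * rho0 e).
pose Q y := Rintegral mu `[0, y] (fun e => rhob e * ub e).
pose B y := Rintegral mu `[0, y] (fun e => ub e * ub e * rhob e).
pose C y := Rintegral mu `[0, y] (fun e => e * (ub e * ub e * rhob e)).
have FL y x s : Fyxt u0 rho0 y x s = s * U y + Mm y - x * P y by exact: F_lin.
have GL y x s : Gtauxt ub rhob y x s = x * Q y - s * B y + C y by exact: G_lin.
have P0 y : 0 <= P y.
  apply: Rintegral_ge0 => e; rewrite /= in_itv /= => /andP[e0 _]; exact: ltW (prho0 e e0).
have Mm0 y : 0 <= Mm y.
  apply: Rintegral_ge0 => e; rewrite /= in_itv /= => /andP[e0 _].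
  by apply: mulr_ge0 => //; exact: ltW (prho0 e e0).
have Q0 y : 0 <= Q y.
  apply: Rintegral_ge0 => e; rewrite /= in_itv /= => /andP[e0 _].
  by apply: mulr_ge0; apply: ltW; [exact: prhob| exact: pub].
have C0 y : 0 <= C y.
  apply: Rintegral_ge0 => e; rewrite /= in_itv /= => /andP[e0 _].
  apply: mulr_ge0 => //; apply: mulr_ge0; [apply: mulr_ge0|]; apply: ltW; 
    [exact: pub| exact: pub| exact: prhob].
have UM y : 0 <= U y + M0 * P y.
  have mD : measurable (`[0, y]%classic : set R) by exact: measurable_itv.
  rewrite /U /P -RintegralZl //; last exact: LB_int.
  rewrite -RintegralD //; [|exact: LB_int (LB_mul lu0 lr0)|exact: LB_int (LB_mul (LB_cst M0) lr0)].
  apply: Rintegral_ge0 => e; rewrite /= in_itv /= => /andP[e0 _].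
  have := hM0 e e0; rewrite ler_norml => /andP[h1 _].
  rewrite -mulrDl; apply: mulr_ge0; [lra | exact: ltW (prho0 e e0)].
have F1 x s y : 0 <= x -> 0 <= s -> 0 <= y -> Fmin u0 rho0 x s <= Fyxt u0 rho0 y x s.
  move=> x0 s0 y0; rewrite /Fmin; apply: ge_inf; first exact: (@F_bnd R u0 rho0 M0 x s lu0 lr0 hM0 prho0 x0 s0).
  by exists y => //=; rewrite in_itv /= y0.
have F2 x s c : (forall y, 0 <= y -> c <= Fyxt u0 rho0 y x s) -> c <= Fmin u0 rho0 x s.
  move=> H; rewrite /Fmin; apply: lb_le_inf.
    by exists (Fyxt u0 rho0 0 x s), 0 => //=; rewrite in_itv /= lexx.
  move=> z [y + <-]; rewrite /= in_itv /= andbT; exact: H.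
have F3 x s : 0 <= x -> 0 <= s -> Fmin u0 rho0 x s <= 0.
  by move=> x0 s0; rewrite -(F_at0 u0 rho0 x s); apply: F1.
have G1 x s y : 0 <= x -> 0 <= s -> 0 <= y -> Gmin ub rhob x s <= Gtauxt ub rhob y x s.
  move=> x0 s0 y0; rewrite /Gmin; apply: ge_inf; first exact: (@G_bnd R ub rhob Mu x s lub lrb hMu pub prhob x0 s0).
  by exists y => //=; rewrite in_itv /= y0.
have G2 x s c : (forall y, 0 <= y -> c <= Gtauxt ub rhob y x s) -> c <= Gmin ub rhob x s.
  move=> H; rewrite /Gmin; apply: lb_le_inf.
    by exists (Gtauxt ub rhob 0 x s), 0 => //=; rewrite in_itv /= lexx.
  move=> z [y + <-]; rewrite /= in_itv /= andbT; exact: H.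
have G3 x s : 0 <= x -> 0 <= s -> Gmin ub rhob x s <= 0.
  by move=> x0 s0; rewrite -(G_at0 ub rhob x s); apply: G1.
have key l r : l < r -> Iset u0 rho0 ub rhob t l -> Iset u0 rho0 ub rhob t r -> False.
  move=> lr [l0 hl] [_ hr].
  have r0 : 0 <= r by apply: le_trans (ltW lr).
  have Fmono : Fmin u0 rho0 r t <= Fmin u0 rho0 l t.
    apply: F2 => y y0; apply: le_trans (F1 r t y r0 t0 y0) _.
    rewrite !FL; have := ler_wpM2r (P0 y) (ltW lr); lra.
  have Gmono : Gmin ub rhob l t <= Gmin ub rhob r t.
    apply: G2 => y y0; apply: le_trans (G1 l t y l0 t0 y0) _.
    rewrite !GL; have := ler_wpM2r (Q0 y) (ltW lr); lra.
  have eFr : Fmin u0 rho0 r t = Fmin u0 rho0 l t.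
    by apply/eqP; rewrite eq_le Fmono /= hl (le_trans Gmono) // hr.
  have eGl : Gmin ub rhob l t = Fmin u0 rho0 l t by rewrite hl.
  have eGr : Gmin ub rhob r t = Fmin u0 rho0 l t by rewrite -hr eFr.
  have c0 : Fmin u0 rho0 l t = 0.
    apply/eqP; rewrite eq_le F3 //=; rewrite leNgt; apply/negP => cneg.
    set c := Fmin u0 rho0 l t in cneg eFr eGl eGr *.
    pose K := l + t * M0; pose d := r - l.
    have K0 : 0 <= K by rewrite /K; apply: addr_ge0 => //; exact: mulr_ge0.
    have d0 : 0 < d by rewrite /d subr_gt0.
    have dK : 0 < d + K by apply: ltr_wpDr.
    have hlow : c * K / (d + K) <= c.
      rewrite {2}/c; apply: F2 => y y0.
      rewrite ler_pdivrMr //.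
      have h1 : c <= Fyxt u0 rho0 y l t - d * P y.
        rewrite -eFr; apply: le_trans (F1 r t y r0 t0 y0) _.
        by rewrite !FL /d; lra.
      have h2 : - K * P y <= Fyxt u0 rho0 y l t.
        rewrite FL /K; have := ler_wpM2l t0 (UM y); have := Mm0 y.
        rewrite mulrDr; nra.
      have p1 : 0 <= K * (Fyxt u0 rho0 y l t - d * P y - c) by apply: mulr_ge0 => //; lra.
      have p2 : 0 <= d * (Fyxt u0 rho0 y l t + K * P y) by apply: mulr_ge0; [exact: ltW| lra].
      nra.
    move: hlow; rewrite ler_pdivrMr //; nra.
  set s := t' / t.
  have s0 : 0 < s by rewrite /s divr_gt0.
  have s1 : s <= 1 by rewrite /s ler_pdivrMr // mul1r; exact: ltW.
  have st : t' = s * t by rewrite /s divfK // gt_eqF.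
  have scal x : 0 <= x -> Fmin u0 rho0 x t = 0 -> Gmin ub rhob x t = 0 ->
      Iset u0 rho0 ub rhob t' (x * s).
    move=> x0 hF hG; split; first by apply: mulr_ge0 => //; exact: ltW.
    have hs0 : 0 <= t' by exact: ltW.
    have xs0 : 0 <= x * s by apply: mulr_ge0 => //; exact: ltW.
    have -> : Fmin u0 rho0 (x * s) t' = 0.
      apply/eqP; rewrite eq_le F3 //=; apply: F2 => y y0.
      have := F1 x t y x0 t0 y0; rewrite hF FL => h.
      rewrite FL st.
      have -> : s * t * U y + Mm y - x * s * P y = s * (t * U y + Mm y - x * P y) + (1 - s) * Mm y by ring.
      apply: addr_ge0; apply: mulr_ge0 => //; [exact: ltW | lra].
    have -> : Gmin ub rhob (x * s) t' = 0.
      apply/eqP; rewrite eq_le G3 //=; apply: G2 => y y0.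
      have := G1 x t y x0 t0 y0; rewrite hG GL => h.
      rewrite GL st.
      have -> : x * s * Q y - s * t * B y + C y = s * (x * Q y - t * B y + C y) + (1 - s) * C y by ring.
      apply: addr_ge0; apply: mulr_ge0 => //; [exact: ltW | lra].
    by [].
  have [p0 hp0] := hsingle.
  have hls := scal l l0 c0 (etrans eGl c0).
  have hrs := scal r r0 (etrans eFr c0) (etrans eGr c0).
  rewrite hp0 /= in hls hrs.
  have : l * s = r * s by rewrite hls hrs.
  move/(mulIf (lt0r_neq0 s0)) => elr.
  by move: lr; rewrite elr ltxx.
case: (pselect (exists p, Iset u0 rho0 ub rhob t p)) => [[p hp]|hn]; last first.
  left; apply/seteqP; split => x // hx; exfalso; apply: hn; by exists x.
right; exists p; apply/seteqP; split => x hx; last by rewrite hx.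
rewrite /=; apply: contrapT => hxp.
have [hlt|hgt] : x < p \/ p < x.
  by case: (ltgtP x p) => e; [left|right|exfalso; exact: hxp e].
- exact: (key x p hlt hx hp).
- exact: (key p x hgt hp hx).
Qed.
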